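(* Fix $y>0$ and prices $0\le p_1'<p_1''\le y$, and consider an increase in the price of good 1 from $p_1'$ to $p_1''$. Suppose Assumptions 1 (with $U_0$ strictly increasing) and 2 hold. For a consumer $i$ with threshold $t_i$: 1. If $p_1'\ge t_i$ (no attention), then regardless of preferences $S^{EV}=0$. 2. If $U_1(y-p_1')\le U_0(y)$, then regardless of attention $S^{EV}=0$. 3. If $U_1(y-p_1'')\le U_0(y)<U_1(y-p_1')$, then for both full attention ($p_1'<p_1''<t_i$) and partial attention ($p_1'<t_i\le p_1''$) consumers, $S^{EV}=y-p_1'-U_1^{-1}(U_0(y))=p^{10}-p_1'\le p_1''-p_1'$. 4. If $U_0(y)<U_1(y-p_1'')<U_1(y-p_1')$, then (a) if $p_1'<p_1''<t_i$ (full attention), $S^{EV}=p_1''-p_1'$; (b) if $p_1'<t_i\le p_1''$ (partial attention), $S^{EV}=y-p_1'-U_1^{-1}(U_0(y))=p^{10}-p_1'>p_1''-p_1'$. Here $p^{10}$ denotes the price of good 1 satisfying $U_1(y-p^{10})=U_0(y)$.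
   Context: Two goods, $0$ (price $0$) and $1$ (price $p_1\ge0$). All consumers have common income $y>0$, choose one good and spend the remainder on a numeraire. All consumers share utility functions $U_0:(0,\infty)\to[0,\infty)$ and $U_1:[0,\infty)\to[0,\infty)$ of the numeraire amount. Each consumer $i$ has an attention-price threshold $t_i$, distributed in the population with CDF $G$; consumer $i$ considers good 1 at price $p_1$ iff $p_1<t_i$ (good 0 is always considered) and chooses her utility-maximizing considered good, ties broken toward good 0. Assumption 1: (i) $U_0$ strictly increasing, $U_1$ continuous and strictly increasing; (ii) for every $y>0$ there is $\bar p_1\in[0,y]$ with $U_0(y)\ge U_1(y-\bar p_1)$. Assumption 2: $G(0)=0$. Equivalent variation of consumer $i$ for the price increase from $p_1'$ to $p_1''$: if $p_1''<t_i$ (full attention), $S^{EV}$ is the solution $S$ of $\max\{U_0(y-S),U_1(y-S-p_1')\}=\max\{U_0(y),U_1(y-p_1'')\}$; if $p_1'<t_i\le p_1''$ (partial attention), it solves $\max\{U_0(y-S),U_1(y-S-p_1')\}=U_0(y)$; if $p_1'\ge t_i$ (no attention), it solves $U_0(y-S)=U_0(y)$. *)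

(* Defs.v *)
From Stdlib Require Import Reals.
Open Scope R_scope.

(* Utilities are total functions R -> R; only their values on the economic
   domains ((0,oo) for U0, [0,oo) for U1) are ever used. *)

(* [best_value U0 U1 y p S v] : with income y - S and price p of good 1,
   the maximal utility over the AVAILABLE options equals v, i.e.
   max{U0(y-S), U1(y-S-p)} = v, where good 0 is available iff y-S > 0
   (domain of U0) and good 1 iff y-S-p >= 0 (domain of U1). *)
Definition best_value (U0 U1 : R -> R) (y p S v : R) : Prop :=
  ((0 < y - S /\ U0 (y - S) = v) \/ (0 <= y - S - p /\ U1 (y - S - p) = v)) /\
  (0 < y - S -> U0 (y - S) <= v) /\
  (0 <= y - S - p -> U1 (y - S - p) <= v).

Definition EV_solves (U0 U1 : R -> R) (y p1' p1'' t S : R) : Prop :=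
  (p1'' < t -> best_value U0 U1 y p1' S (Rmax (U0 y) (U1 (y - p1'')))) /\
  (p1' < t <= p1'' -> best_value U0 U1 y p1' S (U0 y)) /\
  (t <= p1' -> 0 < y - S /\ U0 (y - S) = U0 y).

Definition EV_is (U0 U1 : R -> R) (y p1' p1'' t s : R) : Prop :=
  EV_solves U0 U1 y p1' p1'' t s /\
  forall S, EV_solves U0 U1 y p1' p1'' t S -> S = s.

Definition is_U1inv (U1 : R -> R) (v u : R) : Prop := 0 <= u /\ U1 u = v.

Definition is_p10 (U0 U1 : R -> R) (y p10 : R) : Prop :=
  is_U1inv U1 (U0 y) (y - p10).

(* Main.v *)
Require Import Defs.
From Stdlib Require Import Reals Ranalysis5 Lra.
Open Scope R_scope.
Lemma clamp_cont (U1 : R -> R) (v : R)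
  (HU1cont : forall x, 0 <= x -> continue_in U1 (fun z => 0 <= z) x) a :
  0 <= a -> continuity_pt (fun z => U1 (Rmax 0 z) - v) a.
Proof.
  intros Ha eps Heps.
  destruct (HU1cont a Ha eps Heps) as [alp [Halp H]].
  exists alp; split; auto.
  intros x [[_ Hxa] Hd]. simpl in *. unfold R_dist in *.
  rewrite (Rmax_right 0 a Ha).
  replace (U1 (Rmax 0 x) - v - (U1 a - v)) with (U1 (Rmax 0 x) - U1 a) by ring.
  destruct (Req_dec (Rmax 0 x) a) as [E|E].
  - rewrite E. replace (U1 a - U1 a) with 0 by ring. rewrite Rabs_R0. lra.
  - apply H. split.
    + split; [apply Rmax_l | auto].
    + unfold Rmax in *. destruct (Rle_dec 0 x).
      * auto.
      * unfold Rabs in *. destruct (Rcase_abs (0 - a)), (Rcase_abs (x - a)); lra.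
Qed.

Lemma ivt_U1 (U1 : R -> R) (v a b : R)
  (HU1cont : forall x, 0 <= x -> continue_in U1 (fun z => 0 <= z) x) :
  0 <= a -> a <= b -> U1 a <= v -> v <= U1 b -> exists u, a <= u <= b /\ U1 u = v.
Proof.
  intros Ha Hab H1 H2.
  destruct (Req_dec (U1 a) v) as [E|E]; [exists a; split; [lra|auto]|].
  destruct (Req_dec (U1 b) v) as [E'|E']; [exists b; split; [lra|auto]|].
  destruct (Req_dec a b) as [E''|E'']; [subst; lra|].
  destruct (IVT_interv (fun z => U1 (Rmax 0 z) - v) a b) as [z [Hz Hfz]].
  - intros c Hc. apply clamp_cont; auto; lra.
  - lra.
  - rewrite Rmax_right; lra.
  - rewrite Rmax_right; lra.
  - exists z; split; auto. rewrite Rmax_right in Hfz; lra.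
Qed.

Lemma U0_inj (U0 : R -> R) (HU0inc : forall a b, 0 < a -> a < b -> U0 a < U0 b) a b :
  0 < a -> 0 < b -> U0 a = U0 b -> a = b.
Proof.
  intros Ha Hb E. destruct (Rtotal_order a b) as [H|[H|H]]; auto.
  - specialize (HU0inc a b Ha H); lra.
  - specialize (HU0inc b a Hb H); lra.
Qed.

Lemma U1_inj (U1 : R -> R) (HU1inc : forall a b, 0 <= a -> a < b -> U1 a < U1 b) a b :
  0 <= a -> 0 <= b -> U1 a = U1 b -> a = b.
Proof.
  intros Ha Hb E. destruct (Rtotal_order a b) as [H|[H|H]]; auto.
  - specialize (HU1inc a b Ha H); lra.
  - specialize (HU1inc b a Hb H); lra.
Qed.

Lemma bv_zero U0 U1 y p
  (HU0inc : forall a b, 0 < a -> a < b -> U0 a < U0 b)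
  (HU1inc : forall a b, 0 <= a -> a < b -> U1 a < U1 b) :
  0 < y -> 0 <= p -> p <= y -> U1 (y - p) <= U0 y ->
  best_value U0 U1 y p 0 (U0 y) /\ forall S, best_value U0 U1 y p S (U0 y) -> S = 0.
Proof.
  intros Hy Hp Hpy HU. split.
  - unfold best_value. replace (y - 0) with y by ring.
    split; [left; split; auto; lra|]. split; intros; [lra|].
    replace (y - p) with (y - 0 - p) in HU by ring. replace (y - 0) with y in HU by ring. auto.
  - intros S [[[H1 H2]|[H1 H2]] [H3 H4]].
    + assert (y - S = y) by (apply (U0_inj U0); auto). lra.
    + assert (S <= 0).
      { destruct (Rle_dec S 0); auto.
        assert (U1 (y - S - p) < U1 (y - p)) by (apply HU1inc; lra). lra. }
      destruct (Req_dec S 0); auto.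
      assert (U0 y < U0 (y - S)) by (apply HU0inc; lra).
      specialize (H3 ltac:(lra)). lra.
Qed.

Lemma bv_u U0 U1 y p u
  (HU0inc : forall a b, 0 < a -> a < b -> U0 a < U0 b)
  (HU1inc : forall a b, 0 <= a -> a < b -> U1 a < U1 b) :
  0 < y -> 0 <= p -> p <= y -> U0 y < U1 (y - p) -> 0 <= u -> U1 u = U0 y ->
  u < y - p /\
  best_value U0 U1 y p (y - p - u) (U0 y) /\
  forall S, best_value U0 U1 y p S (U0 y) -> S = y - p - u.
Proof.
  intros Hy Hp Hpy HU Hu Hu'.
  assert (Hlt : u < y - p).
  { destruct (Rlt_dec u (y - p)); auto.
    destruct (Req_dec u (y - p)) as [E|E]; [rewrite <- E in HU; lra|].
    assert (U1 (y - p) < U1 u) by (apply HU1inc; lra). lra. }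
  split; auto. split.
  - unfold best_value. replace (y - (y - p - u) - p) with u by ring.
    split; [right; split; auto|]. split; [|intros; lra].
    intros. replace (y - (y - p - u)) with (p + u) by ring.
    left. apply HU0inc; lra.
  - intros S [[[H1 H2]|[H1 H2]] [H3 H4]].
    + assert (y - S = y) by (apply (U0_inj U0); auto).
      assert (S = 0) by lra. subst S.
      specialize (H4 ltac:(lra)). replace (y - 0 - p) with (y - p) in H4 by ring. lra.
    + assert (y - S - p = u) by (apply (U1_inj U1); auto; lra). lra.
Qed.

Lemma noatt U0 U1 y p1' p1'' t
  (HU0inc : forall a b, 0 < a -> a < b -> U0 a < U0 b) :
  0 < y -> p1' < p1'' -> t <= p1' -> EV_is U0 U1 y p1' p1'' t 0.
Proof.
  intros Hy Hpp Ht. split.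
  - split; [intros; lra|]. split; [intros; lra|].
    intros _. replace (y - 0) with y by ring. auto.
  - intros S [_ [_ H]]. destruct (H Ht) as [H1 H2].
    assert (y - S = y) by (apply (U0_inj U0); auto). lra.
Qed.

Theorem lemma1 (U0 U1 : R -> R) (y p1' p1'' t : R)
  (* prices and income *)
  (Hy : 0 < y) (Hp' : 0 <= p1') (Hpp : p1' < p1'') (Hp'' : p1'' <= y)
  (* codomains [0,oo) on the respective domains *)
  (HU0nn : forall x, 0 < x -> 0 <= U0 x)
  (HU1nn : forall x, 0 <= x -> 0 <= U1 x)
  (* Assumption 1(i) *)
  (HU0inc : forall a b, 0 < a -> a < b -> U0 a < U0 b)
  (HU1inc : forall a b, 0 <= a -> a < b -> U1 a < U1 b)
  (HU1cont : forall x, 0 <= x -> continue_in U1 (fun z => 0 <= z) x)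
  (* Assumption 1(ii) *)
  (HA1ii : forall y', 0 < y' -> exists pbar, 0 <= pbar <= y' /\ U1 (y' - pbar) <= U0 y')
  (* Assumption 2 (G(0) = 0), for consumer i: threshold t_i > 0 *)
  (Ht : 0 < t) :
  (* 1. no attention *)
  (t <= p1' -> EV_is U0 U1 y p1' p1'' t 0) /\
  (* 2. *)
  (U1 (y - p1') <= U0 y -> EV_is U0 U1 y p1' p1'' t 0) /\
  (* 3. full or partial attention *)
  (U1 (y - p1'') <= U0 y < U1 (y - p1') ->
     p1'' < t \/ (p1' < t /\ t <= p1'') ->
     exists u p10, is_U1inv U1 (U0 y) u /\ is_p10 U0 U1 y p10 /\
       EV_is U0 U1 y p1' p1'' t (y - p1' - u) /\
       y - p1' - u = p10 - p1' /\ p10 - p1' <= p1'' - p1') /\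
  (* 4. *)
  (U0 y < U1 (y - p1'') < U1 (y - p1') ->
     (* (a) full attention *)
     (p1'' < t -> EV_is U0 U1 y p1' p1'' t (p1'' - p1')) /\
     (* (b) partial attention *)
     (p1' < t <= p1'' ->
       exists u p10, is_U1inv U1 (U0 y) u /\ is_p10 U0 U1 y p10 /\
         EV_is U0 U1 y p1' p1'' t (y - p1' - u) /\
         y - p1' - u = p10 - p1' /\ p10 - p1' > p1'' - p1')).
Proof.
  assert (Hmono : U1 (y - p1'') < U1 (y - p1')) by (apply HU1inc; lra).
  split; [apply noatt; auto|].
  split.
  { intros HU.
    destruct (Rle_dec t p1') as [Ht'|Ht']; [apply noatt; auto|].
    destruct (bv_zero U0 U1 y p1' HU0inc HU1inc Hy Hp' ltac:(lra) HU) as [B1 B2].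
    assert (Emax : Rmax (U0 y) (U1 (y - p1'')) = U0 y) by (apply Rmax_left; lra).
    split.
    - split; [intros; rewrite Emax; auto|]. split; [intros; auto|intros; lra].
    - intros S [F [P _]]. destruct (Rlt_dec p1'' t).
      + apply B2. rewrite <- Emax. auto.
      + apply B2. apply P. lra. }
  split.
  { intros [HA HB] Hatt.
    destruct (ivt_U1 U1 (U0 y) (y - p1'') (y - p1') HU1cont ltac:(lra) ltac:(lra) HA ltac:(lra))
      as [u [Hu Hu']].
    destruct (bv_u U0 U1 y p1' u HU0inc HU1inc Hy Hp' ltac:(lra) HB ltac:(lra) Hu') as [Hlt [B1 B2]].
    assert (Emax : Rmax (U0 y) (U1 (y - p1'')) = U0 y) by (apply Rmax_left; lra).
    exists u, (y - u). split; [split; auto; lra|]. split.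
    { unfold is_p10, is_U1inv. replace (y - (y - u)) with u by ring. split; auto; lra. }
    split; [|split; lra].
    split.
    - split; [intros; rewrite Emax; auto|]. split; [intros; auto|intros; lra].
    - intros S [F [P _]]. destruct (Rlt_dec p1'' t).
      + apply B2. rewrite <- Emax. auto.
      + apply B2. apply P. lra. }
  intros [HA HB]. split.
  - intros Hfull.
    assert (Emax : Rmax (U0 y) (U1 (y - p1'')) = U1 (y - p1'')) by (apply Rmax_right; lra).
    split.
    + split; [|split; intros; lra]. intros _. rewrite Emax. unfold best_value.
      replace (y - (p1'' - p1') - p1') with (y - p1'') by ring.
      split; [right; split; auto; lra|]. split; [|intros; lra].
      intros. destruct (Rle_dec y (y - (p1'' - p1'))); [lra|].
      assert (U0 (y - (p1'' - p1')) < U0 y) by (apply HU0inc; lra). lra.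
    + intros S [F _]. specialize (F Hfull). rewrite Emax in F.
      destruct F as [[[H1 H2]|[H1 H2]] [H3 H4]].
      * assert (S < 0).
        { destruct (Rlt_dec S 0); auto.
          destruct (Req_dec S 0) as [E|E]; [subst S; replace (y-0) with y in H2 by ring; lra|].
          assert (U0 (y - S) < U0 y) by (apply HU0inc; lra). lra. }
        assert (U1 (y - p1'') < U1 (y - S - p1')) by (apply HU1inc; lra).
        specialize (H4 ltac:(lra)). lra.
      * assert (y - S - p1' = y - p1'') by (apply (U1_inj U1); auto; lra). lra.
  - intros Hpart.
    destruct (HA1ii y Hy) as [pbar [Hpb Hpb']].
    assert (Hpbl : y - pbar <= y - p1'').
    { destruct (Rle_dec (y - pbar) (y - p1'')); auto.
      assert (U1 (y - p1'') < U1 (y - pbar)) by (apply HU1inc; lra). lra. }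
    destruct (ivt_U1 U1 (U0 y) (y - pbar) (y - p1'') HU1cont ltac:(lra) Hpbl Hpb' ltac:(lra))
      as [u [Hu Hu']].
    assert (HB' : U0 y < U1 (y - p1')) by lra.
    destruct (bv_u U0 U1 y p1' u HU0inc HU1inc Hy Hp' ltac:(lra) HB' ltac:(lra) Hu') as [Hlt [B1 B2]].
    assert (Hlt2 : u < y - p1'').
    { destruct (Req_dec u (y - p1'')) as [E|E]; [rewrite E in Hu'; lra|lra]. }
    exists u, (y - u). split; [split; auto; lra|]. split.
    { unfold is_p10, is_U1inv. replace (y - (y - u)) with u by ring. split; auto; lra. }
    split; [|split; lra].
    split.
    + split; [intros; lra|]. split; [intros; auto|intros; lra].
    + intros S [_ [P _]]. apply B2. apply P. auto.
Qed.
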